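(* On $\mathbb R^8$ with coframe $e^0,\dots,e^7$, let $\Omega=(e^4+ie^0)\wedge(e^1+ie^5)\wedge(e^2+ie^6)\wedge(e^3+ie^7)$, $\omega=e^{15}+e^{26}+e^{37}+e^{40}$, and for $\tau\in\mathbb R$ let $\Phi_\tau=\cosh(2\tau)\mathrm{Re}(\Omega)-\tfrac12\omega\wedge\omega+i\sinh(2\tau)\mathrm{Im}(\Omega)$. For $\tau\neq0$, the stabiliser of $\Phi_\tau$ in $\mathrm{GL}(8,\mathbb R)$ (acting by pullback) is the group $\mathrm{SU}(4)$ of linear maps preserving the Euclidean metric $g=\sum_a(e^a)^2$, $\omega$ and $\Omega$.
   Context: Notation: $e^{ab}=e^a\wedge e^b$. For $\tau=0$, $\Phi_0$ is the (real) Cayley form, whose stabiliser is $\mathrm{Spin}(7)$. *)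

(* Defs.v *)
From HB Require Import structures.
From mathcomp Require Import all_boot all_order all_algebra all_fingroup.
From mathcomp Require Import complex.
From mathcomp Require Import reals sequences.
Set Implicit Arguments. Unset Strict Implicit. Unset Printing Implicit Defensive.
Import Order.TTheory GRing.Theory Num.Theory.
Local Open Scope ring_scope.
Local Open Scope complex_scope.

Section Forms.
Variable R : realType.
Local Notation C := (R[i]).

Definition coshR (x : R) : R := (expR x + expR (- x)) / 2.
Definition sinhR (x : R) : R := (expR x - expR (- x)) / 2.

Definition vec := 'cV[R]_8.
Definition e (a : 'I_8) (v : vec) : R := v a 0.
Definition eC (a : 'I_8) (v : vec) : C := (e a v)%:C.

Definition form4 (K : Type) := ('I_4 -> vec) -> K.
Definition form2 := vec -> vec -> R.

Definition pullback4 K (A : 'M[R]_8) (al : form4 K) : form4 K :=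
  fun v => al (fun j => A *m v j).
Definition pullback2 (A : 'M[R]_8) (al : form2) : form2 :=
  fun u w => al (A *m u) (A *m w).

Definition wedge1_4 (th : 'I_4 -> vec -> C) : form4 C :=
  fun v => \det (\matrix_(i < 4, j < 4) th i (v j)).

(* wedge of two 2-forms, determinant convention:
   (a /\ b)(v0..v3) = 1/(2!2!) sum_s sgn s a(v_s0,v_s1) b(v_s2,v_s3) *)
Definition wedge2_2 (al be : form2) : form4 R :=
  fun v => 4^-1 * \sum_(s : 'S_4)
     (-1) ^+ s * al (v (s 0)) (v (s 1)) * be (v (s 2)) (v (s 3)).

Definition e2 (a b : 'I_8) : form2 := fun u w => e a u * e b w - e a w * e b u.

Definition i8 (k : nat) : 'I_8 := inord k.

(* Omega = (e4 + i e0) /\ (e1 + i e5) /\ (e2 + i e6) /\ (e3 + i e7) *)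
Definition theta (i : 'I_4) : vec -> C :=
  fun v => (eC (i8 (nth 0%N [:: 4; 1; 2; 3]%N i)) v + 'i%C * eC (i8 (nth 0%N [:: 0; 5; 6; 7]%N i)) v)%R.
Definition Omega : form4 C := wedge1_4 theta.

Definition omega : form2 := fun u w =>
  e2 (i8 1) (i8 5) u w + e2 (i8 2) (i8 6) u w + e2 (i8 3) (i8 7) u w
  + e2 (i8 4) (i8 0) u w.

Definition Phi (tau : R) : form4 C := fun v =>
  ((coshR (2 * tau) * complex.Re (Omega v) - 2^-1 * wedge2_2 omega omega v)%:C
   + 'i%C * (sinhR (2 * tau) * complex.Im (Omega v))%:C)%R.

Definition g (u w : vec) : R := \sum_(a < 8) e a u * e a w.

Definition stab_Phi (tau : R) (A : 'M[R]_8) : Prop :=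
  A \in unitmx /\ pullback4 A (Phi tau) = Phi tau.

Definition SU4 (A : 'M[R]_8) : Prop :=
  A \in unitmx /\
  (forall u w : vec, g (A *m u) (A *m w) = g u w) /\
  pullback2 A omega = omega /\
  pullback4 A Omega = Omega.

End Forms.

(* Main.v *)
Require Import Defs.
From HB Require Import structures.
From mathcomp Require Import all_boot all_order all_algebra all_fingroup.
From mathcomp Require Import complex.
From mathcomp Require Import reals sequences.
From mathcomp Require exp.
From mathcomp Require Import ring lra.
From Stdlib Require Import FunctionalExtensionality.
Import Order.TTheory GRing.Theory Num.Theory.
Local Open Scope ring_scope.

Definition det4e {T : comNzRingType} (m : nat -> nat -> T) : T :=
  m 0 0 * m 1 1 * m 2 2 * m 3 3 - m 0 0 * m 1 1 * m 2 3 * m 3 2 - m 0 0 * m 1 2 * m 2 1 * m 3 3 + m 0 0 * m 1 2 * m 2 3 * m 3 1 + m 0 0 * m 1 3 * m 2 1 * m 3 2 - m 0 0 * m 1 3 * m 2 2 * m 3 1 - m 0 1 * m 1 0 * m 2 2 * m 3 3 + m 0 1 * m 1 0 * m 2 3 * m 3 2 + m 0 1 * m 1 2 * m 2 0 * m 3 3 - m 0 1 * m 1 2 * m 2 3 * m 3 0 - m 0 1 * m 1 3 * m 2 0 * m 3 2 + m 0 1 * m 1 3 * m 2 2 * m 3 0 + m 0 2 * m 1 0 * m 2 1 * m 3 3 - m 0 2 * m 1 0 * m 2 3 * m 3 1 - m 0 2 * m 1 1 * m 2 0 * m 3 3 + m 0 2 * m 1 1 * m 2 3 * m 3 0 + m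 0 2 * m 1 3 * m 2 0 * m 3 1 - m 0 2 * m 1 3 * m 2 1 * m 3 0 - m 0 3 * m 1 0 * m 2 1 * m 3 2 + m 0 3 * m 1 0 * m 2 2 * m 3 1 + m 0 3 * m 1 1 * m 2 0 * m 3 2 - m 0 3 * m 1 1 * m 2 2 * m 3 0 - m 0 3 * m 1 2 * m 2 0 * m 3 1 + m 0 3 * m 1 2 * m 2 1 * m 3 0.

Lemma det4 (T : comNzRingType) (m : nat -> nat -> T) :
  \det (\matrix_(i < 4, j < 4) m i j) = det4e m.
Proof.
rewrite (expand_det_row _ ord0) !big_ord_recl big_ord0 /cofactor.
rewrite !(expand_det_row _ ord0) !big_ord_recl !big_ord0 /cofactor.
rewrite !(expand_det_row _ ord0) !big_ord_recl !big_ord0 /cofactor.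
rewrite !(expand_det_row _ ord0) !big_ord_recl !big_ord0 /cofactor.
rewrite !det_mx00 !mxE /= /det4e.
ring.
Qed.

Definition mm {T : comNzRingType} (Al : nat -> nat -> T) (c d i x : nat) : T :=
  match i with
  | 0 => Al x c
  | 1 => (x == c)%:R
  | 2 => Al x d
  | _ => (x == d)%:R
  end.

Lemma sum_delta4 (T : comNzRingType) (F : 'I_4 -> T) (x : 'I_4) :
  \sum_(c < 4) F c * (nat_of_ord x == nat_of_ord c)%:R = F x.
Proof.
rewrite (bigD1 x) //= eqxx mulr1 big1 ?addr0 // => c Hc.
have -> : (nat_of_ord x == nat_of_ord c) = false.
  by apply/negbTE; rewrite eq_sym; apply: contra Hc => /eqP H; apply/eqP/val_inj.
by rewrite mulr0.
Qed.

Lemma pf4 (T : comNzRingType) (Al : nat -> nat -> T)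
  (asym : forall a b, Al a b = - Al b a) :
  \sum_(s : 'S_4) (-1) ^+ s * Al (s 0) (s 1) * Al (s 2) (s 3)
  = 8 * (Al 0%N 1%N * Al 2%N 3%N - Al 0%N 2%N * Al 1%N 3%N + Al 0%N 3%N * Al 1%N 2%N).
Proof.
have e0 : (0 : 'I_4) = ord0 by apply/val_inj.
have e1 : (1 : 'I_4) = lift ord0 ord0 by apply/val_inj.
have e2 : (2 : 'I_4) = lift ord0 (lift ord0 ord0) by apply/val_inj.
have e3 : (3 : 'I_4) = lift ord0 (lift ord0 (lift ord0 ord0)) by apply/val_inj.
have pw : forall s : 'S_4, Al (s 0) (s 1) * Al (s 2) (s 3) =
   \sum_(c < 4) \sum_(d < 4) \prod_(i < 4) mm Al c d i (s i).
  move=> s.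
  transitivity (\sum_(c < 4) \sum_(d < 4) ((Al (s 0) c * (nat_of_ord (s 1) == nat_of_ord c)%:R) *
        (Al (s 2) d * (nat_of_ord (s 3) == nat_of_ord d)%:R))); last first.
    apply: eq_bigr => c _; apply: eq_bigr => d _.
    rewrite e3 e2 e1 e0 !big_ord_recl big_ord0 /=; ring.
  transitivity (\sum_(c < 4) (Al (s 0) c * (nat_of_ord (s 1) == nat_of_ord c)%:R) * Al (s 2) (s 3)); last first.
    apply: eq_bigr => c _; rewrite -mulr_sumr; congr (_ * _).
    by rewrite (@sum_delta4 _ (fun d : 'I_4 => Al (s 2) d)).
  rewrite -mulr_suml; congr (_ * _).
  by rewrite (@sum_delta4 _ (fun c : 'I_4 => Al (s 0) c)).
have dt : forall c d : 'I_4, \sum_(s : 'S_4) (-1) ^+ s * \prod_(i < 4) mm Al c d i (s i)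
   = \det (\matrix_(i < 4, j < 4) mm Al c d i j).
  move=> c d; rewrite /determinant; apply: eq_bigr => s _; congr (_ * _).
  by apply: eq_bigr => i _; rewrite mxE.
rewrite (eq_bigr (fun s : 'S_4 => \sum_(c < 4) \sum_(d < 4) (-1) ^+ s * \prod_(i < 4) mm Al c d i (s i))); last first.
  move=> s _; rewrite -mulrA pw mulr_sumr; apply: eq_bigr => c _; by rewrite mulr_sumr.
rewrite exchange_big /=; under eq_bigr => c _ do rewrite exchange_big /=.
under eq_bigr => c _ do under eq_bigr => d _ do rewrite dt det4.
rewrite /det4e !big_ord_recl !big_ord0 /=.
rewrite !(asym 1%N 0%N) !(asym 2%N 0%N) !(asym 3%N 0%N) !(asym 2%N 1%N) !(asym 3%N 1%N) !(asym 3%N 2%N).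
ring.
Qed.

Set Implicit Arguments. Unset Strict Implicit. Unset Printing Implicit Defensive.
Local Open Scope complex_scope.

Lemma sum8 (T : nmodType) (F : 'I_8 -> T) :
  \sum_(b < 8) F b = F (inord 0) + (F (inord 1) + (F (inord 2) + (F (inord 3) +
     (F (inord 4) + (F (inord 5) + (F (inord 6) + F (inord 7))))))).
Proof.
rewrite !big_ord_recl big_ord0 addr0.
by repeat congr (_ + _); congr F; apply/val_inj; rewrite /= inordK.
Qed.

Lemma sum4 (T : nmodType) (F : 'I_4 -> T) :
  \sum_(b < 4) F b = F (inord 0) + (F (inord 1) + (F (inord 2) + F (inord 3))).
Proof.
rewrite !big_ord_recl big_ord0 addr0.
by repeat congr (_ + _); congr F; apply/val_inj; rewrite /= inordK.
Qed.

Lemma I4_cases (P : 'I_4 -> Prop) : P (inord 0) -> P (inord 1) -> P (inord 2) -> P (inord 3) ->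
  forall i, P i.
Proof.
move=> h0 h1 h2 h3 i; rewrite -(inord_val i).
by case: i => [[|[|[|[|?]]]] hi] //.
Qed.

Lemma I8_cases (P : 'I_8 -> Prop) : P (inord 0) -> P (inord 1) -> P (inord 2) -> P (inord 3) ->
  P (inord 4) -> P (inord 5) -> P (inord 6) -> P (inord 7) -> forall i, P i.
Proof.
move=> h0 h1 h2 h3 h4 h5 h6 h7 i; rewrite -(inord_val i).
by case: i => [[|[|[|[|[|[|[|[|?]]]]]]]] hi] //.
Qed.

Section Main.
Variable R : realType.
Local Notation C := (R[i]).
Local Notation vec := (vec R).

Definition cf (v : vec) (k : nat) : R := v (inord k) 0.
Definition fb (k : nat) : vec := delta_mx (inord k) 0.
Definition pI (i : nat) : nat := nth 0%N [:: 4; 1; 2; 3]%N i.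
Definition qI (i : nat) : nat := nth 0%N [:: 0; 5; 6; 7]%N i.
Definition fp (i : nat) := fb (pI i).
Definition fq (i : nat) := fb (qI i).

Lemma inord8_eq (k l : nat) : (k < 8)%N -> (l < 8)%N -> (inord k == inord l :> 'I_8) = (k == l).
Proof. by move=> hk hl; rewrite -(inj_eq val_inj) /= !inordK. Qed.

Lemma cf_fb k l : (k < 8)%N -> (l < 8)%N -> cf (fb k) l = (l == k)%:R.
Proof. by move=> hk hl; rewrite /cf /fb mxE inord8_eq // andbT. Qed.

Lemma cfD (u w : vec) k : cf (u + w) k = cf u k + cf w k. Proof. by rewrite /cf mxE. Qed.
Lemma cfB (u w : vec) k : cf (u - w) k = cf u k - cf w k. Proof. by rewrite /cf !mxE. Qed.
Lemma cfZ r (u : vec) k : cf (r *: u) k = r * cf u k. Proof. by rewrite /cf mxE. Qed.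
Lemma cfN (u : vec) k : cf (- u) k = - cf u k. Proof. by rewrite /cf mxE. Qed.

Definition jc (a b : nat) : R :=
  match a, b with
  | 4, 0 => -1 | 0, 4 => 1 | 1, 5 => -1 | 5, 1 => 1
  | 2, 6 => -1 | 6, 2 => 1 | 3, 7 => -1 | 7, 3 => 1
  | _, _ => 0 end.
Definition Jm : 'M[R]_8 := \matrix_(a, b) jc a b.

Definition jv (v : vec) (k : nat) : R :=
  match k with
  | 0 => cf v 4 | 4 => - cf v 0 | 1 => - cf v 5 | 5 => cf v 1
  | 2 => - cf v 6 | 6 => cf v 2 | 3 => - cf v 7 | 7 => cf v 3 | _ => 0 end.

Lemma cfJ (v : vec) k : (k < 8)%N -> cf (Jm *m v) k = jv v k.
Proof.
move=> hk; rewrite /cf mxE sum8 !mxE !inordK //.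
by do 8? (case: k hk => [|k] hk); rewrite /= /cf; ring.
Qed.

Lemma theta_cf (i : 'I_4) (v : vec) : theta i v = (cf v (pI i))%:C + 'i%C * (cf v (qI i))%:C.
Proof. by []. Qed.

Lemma thetaD i (u w : vec) : theta i (u + w) = theta i u + theta i w.
Proof. by rewrite !theta_cf !cfD !rmorphD; ring. Qed.
Lemma thetaB i (u w : vec) : theta i (u - w) = theta i u - theta i w.
Proof. by rewrite !theta_cf !cfB !rmorphB; ring. Qed.
Lemma thetaZ i r (u : vec) : theta i (r *: u) = r%:C * theta i u.
Proof. by rewrite !theta_cf !cfZ !rmorphM; ring. Qed.
Lemma thetaN i (u : vec) : theta i (- u) = - theta i u.
Proof. by rewrite !theta_cf !cfN !rmorphN; ring. Qed.
Lemma theta0 i : theta i (0 : vec) = 0.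
Proof. by rewrite -(subrr (0:vec)) thetaB subrr. Qed.

Lemma theta_J i (v : vec) : theta i (Jm *m v) = 'i%C * theta i v.
Proof.
move: i; apply: I4_cases; rewrite !theta_cf /pI /qI !inordK //= !cfJ //=;
  apply/eqP; rewrite eq_complex /=; apply/andP; split; apply/eqP; ring.
Qed.

Lemma vec_eq (u w : vec) : (forall k, (k < 8)%N -> cf u k = cf w k) -> u = w.
Proof.
move=> H; apply/matrixP => a b; rewrite (ord1 b) -(inord_val a); exact: H (ltn_ord a).
Qed.

Lemma JJ (v : vec) : Jm *m (Jm *m v) = - v.
Proof.
apply: vec_eq => k hk; rewrite cfN cfJ //.
by do 8? (case: k hk => [|k] hk); rewrite /= ?cfJ //= ?opprK.
Qed.

Lemma theta_fp (a b : nat) : (a < 4)%N -> (b < 4)%N ->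
  theta (inord a) (fp b) = (a == b)%:R.
Proof.
move=> ha hb; rewrite theta_cf /fp /pI /qI inordK //.
by do 4? (case: a ha => [|a] ha); do 4? (case: b hb => [|b] hb);
  rewrite //= !cf_fb //= ?mulr0 ?addr0.
Qed.

Lemma theta_fq (a b : nat) : (a < 4)%N -> (b < 4)%N ->
  theta (inord a) (fq b) = (a == b)%:R * 'i%C.
Proof.
move=> ha hb; rewrite theta_cf /fq /pI /qI inordK //.
by do 4? (case: a ha => [|a] ha); do 4? (case: b hb => [|b] hb);
  rewrite //= !cf_fb //= ?mulr0 ?mulr1 ?mul0r ?add0r ?addr0 ?mul1r.
Qed.

Lemma Re_theta i (v : vec) : complex.Re (theta i v) = cf v (pI i).
Proof. by rewrite theta_cf /=; ring. Qed.
Lemma Im_theta i (v : vec) : complex.Im (theta i v) = cf v (qI i).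
Proof. by rewrite theta_cf /=; ring. Qed.

Lemma theta_inj (u w : vec) : (forall i, theta i u = theta i w) -> u = w.
Proof.
move=> H; apply: vec_eq => k hk.
have HR : forall a, (a < 4)%N -> cf u (pI a) = cf w (pI a).
  by move=> a ha; rewrite -(@inordK 3 a ha) -!Re_theta H.
have HI : forall a, (a < 4)%N -> cf u (qI a) = cf w (qI a).
  by move=> a ha; rewrite -(@inordK 3 a ha) -!Im_theta H.
do 8? (case: k hk => [|k] hk).
- exact: (HI 0%N).
- exact: (HR 1%N).
- exact: (HR 2%N).
- exact: (HR 3%N).
- exact: (HR 0%N).
- exact: (HI 1%N).
- exact: (HI 2%N).
- exact: (HI 3%N).
- by [].
Qed.

Definition tup4 (a b c d : vec) : 'I_4 -> vec := fun j => nth a [:: a; b; c; d] j.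

Lemma tup4_0 a b c d : tup4 a b c d (inord 0) = a. Proof. by rewrite /tup4 inordK. Qed.
Lemma tup4_1 a b c d : tup4 a b c d (inord 1) = b. Proof. by rewrite /tup4 inordK. Qed.
Lemma tup4_2 a b c d : tup4 a b c d (inord 2) = c. Proof. by rewrite /tup4 inordK. Qed.
Lemma tup4_3 a b c d : tup4 a b c d (inord 3) = d. Proof. by rewrite /tup4 inordK. Qed.

Lemma Omega_det (V : 'I_4 -> vec) :
  Omega V = det4e (fun a b => theta (inord a) (V (inord b))).
Proof.
rewrite /Omega /wedge1_4 -det4; congr (\det _); apply/matrixP => i j; by rewrite !mxE !inord_val.
Qed.

Lemma Omega_ext (V V' : 'I_4 -> vec) : (forall j, V j = V' j) -> Omega V = Omega V'.
Proof. by move=> H; rewrite !Omega_det; congr (det4e _); apply: functional_extensionality => a;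
  apply: functional_extensionality => b; rewrite H. Qed.

Definition Vp := tup4 (fp 0) (fp 1) (fp 2) (fp 3).
Definition Vq0 := tup4 (fq 0) (fp 1) (fp 2) (fp 3).

Lemma Omega_Vp : Omega Vp = 1.
Proof.
rewrite Omega_det /det4e /Vp tup4_0 tup4_1 tup4_2 tup4_3 !theta_fp //=; ring.
Qed.

Lemma Omega_Vq0 : Omega Vq0 = 'i%C.
Proof.
rewrite Omega_det /det4e /Vq0 tup4_0 tup4_1 tup4_2 tup4_3 !theta_fp // !theta_fq //=; ring.
Qed.

End Main.
Arguments fb {R} k.
Arguments fp {R} i.
Arguments fq {R} i.
Arguments Jm {R}.
Arguments Vp {R}.
Arguments Vq0 {R}.
Arguments jc {R} a b.


Set Implicit Arguments. Unset Strict Implicit. Unset Printing Implicit Defensive.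
Local Open Scope complex_scope.

Section Main2.
Variable R : realType.
Local Notation C := (R[i]).
Local Notation vec := (vec R).

Lemma cz (z : C) : complex.Im z = 0 -> complex.Im ('i%C * z) = 0 -> z = 0.
Proof. case: z => x y /= hy hx; apply/eqP; rewrite eq_complex /=; apply/andP; split; apply/eqP; lra. Qed.

Lemma Omega_fq (a b : vec) (k l : nat) : (k < 4)%N -> (l < 4)%N ->
  Omega (tup4 a b (fp k) (fq l)) = 'i%C * Omega (tup4 a b (fp k) (fp l)).
Proof.
move=> hk hl; rewrite !Omega_det /det4e !tup4_0 !tup4_1 !tup4_2 !tup4_3 !theta_fp // !theta_fq //.
ring.
Qed.

Lemma lemK (a b : vec) : a != 0 ->
  (forall x y, complex.Im (Omega (tup4 a b x y)) = 0) ->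
  exists r s : R, b = r *: a + s *: (Jm *m a).
Proof.
move=> a0 H.
pose al (k : nat) := theta (inord k) a.
pose be (k : nat) := theta (inord k) b.
have Z : forall k l, (k < 4)%N -> (l < 4)%N -> Omega (tup4 a b (fp k) (fp l)) = 0.
  move=> k l hk hl; apply: cz; first exact: H.
  by rewrite -Omega_fq //; exact: H.
have E : forall k l, (k < 4)%N -> (l < 4)%N -> Omega (tup4 a b (fp k) (fp l)) =
   det4e (fun x y => theta (inord x) (tup4 a b (fp k) (fp l) (inord y))).
  by move=> k l _ _; rewrite Omega_det.
have M01 : al 0%N * be 1%N - al 1%N * be 0%N = 0.
  rewrite -(Z 2%N 3%N) // E // /det4e !tup4_0 !tup4_1 !tup4_2 !tup4_3 !theta_fp //= /al /be; ring.
have M02 : al 0%N * be 2%N - al 2%N * be 0%N = 0.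
  rewrite -oppr0 -(Z 1%N 3%N) // E // /det4e !tup4_0 !tup4_1 !tup4_2 !tup4_3 !theta_fp //= /al /be; ring.
have M03 : al 0%N * be 3%N - al 3%N * be 0%N = 0.
  rewrite -(Z 1%N 2%N) // E // /det4e !tup4_0 !tup4_1 !tup4_2 !tup4_3 !theta_fp //= /al /be; ring.
have M12 : al 1%N * be 2%N - al 2%N * be 1%N = 0.
  rewrite -(Z 0%N 3%N) // E // /det4e !tup4_0 !tup4_1 !tup4_2 !tup4_3 !theta_fp //= /al /be; ring.
have M13 : al 1%N * be 3%N - al 3%N * be 1%N = 0.
  rewrite -oppr0 -(Z 0%N 2%N) // E // /det4e !tup4_0 !tup4_1 !tup4_2 !tup4_3 !theta_fp //= /al /be; ring.
have M23 : al 2%N * be 3%N - al 3%N * be 2%N = 0.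
  rewrite -(Z 0%N 1%N) // E // /det4e !tup4_0 !tup4_1 !tup4_2 !tup4_3 !theta_fp //= /al /be; ring.
have Mall : forall m n, (m < 4)%N -> (n < 4)%N -> al m * be n = al n * be m.
  move=> m n hm hn; apply/eqP; rewrite -subr_eq0; apply/eqP.
  do 4? (case: m hm => [|m] hm); do 4? (case: n hn => [|n] hn); rewrite //=;
  first [ by rewrite subrr | exact: M01 | exact: M02 | exact: M03 | exact: M12 | exact: M13 | exact: M23 | by rewrite -[0]oppr0 -M01; ring | by rewrite -[0]oppr0 -M02; ring | by rewrite -[0]oppr0 -M03; ring | by rewrite -[0]oppr0 -M12; ring | by rewrite -[0]oppr0 -M13; ring | by rewrite -[0]oppr0 -M23; ring ].
have [m [hm alm]] : exists m, (m < 4)%N /\ al m != 0.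
  case: (eqVneq (al 0%N) 0) => h0; last by exists 0%N.
  case: (eqVneq (al 1%N) 0) => h1; last by exists 1%N.
  case: (eqVneq (al 2%N) 0) => h2; last by exists 2%N.
  case: (eqVneq (al 3%N) 0) => h3; last by exists 3%N.
  exfalso; move/negP: a0; apply; apply/eqP; apply: theta_inj; apply: I4_cases;
  by rewrite theta0.
pose lam := be m / al m.
have Hb : forall n, (n < 4)%N -> be n = lam * al n.
  move=> n hn; apply: (mulfI alm); rewrite (Mall m n hm hn) /lam.
  by field.
exists (complex.Re lam), (complex.Im lam).
apply: theta_inj => i; rewrite thetaD !thetaZ theta_J.
rewrite -(inord_val i); have hi := ltn_ord i.
rewrite -/(be _) -/(al _) (Hb _ hi).
rewrite {1}(complexE lam); ring.
Qed.

End Main2.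

Set Implicit Arguments. Unset Strict Implicit. Unset Printing Implicit Defensive.
Local Open Scope complex_scope.

Section Main3.
Variable R : realType.
Local Notation C := (R[i]).
Local Notation vec := (vec R).

Lemma coshR_gt0 (x : R) : 0 < coshR x.
Proof. rewrite /coshR divr_gt0 // addr_gt0 //; exact: exp.expR_gt0. Qed.

Lemma sinhR_neq0 (x : R) : x != 0 -> sinhR x != 0.
Proof.
move=> hx; rewrite /sinhR; apply: mulf_neq0; last by rewrite invr_eq0 pnatr_eq0.
rewrite subr_eq0; apply/eqP => /exp.expR_inj h.
move/eqP: hx; apply; lra.
Qed.

Lemma ReC (x y : R) : complex.Re (x%:C + 'i%C * y%:C) = x.
Proof. by rewrite /=; ring. Qed.
Lemma ImC (x y : R) : complex.Im (x%:C + 'i%C * y%:C) = y.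
Proof. by rewrite /=; ring. Qed.

Lemma Omega_vJv (v x y : vec) : Omega (tup4 v (Jm *m v) x y) = 0.
Proof.
rewrite Omega_det /det4e !tup4_0 !tup4_1 !tup4_2 !tup4_3 !theta_J; ring.
Qed.

Lemma fb_neq0 k : (k < 8)%N -> (fb k : vec) != 0.
Proof.
move=> hk; apply/eqP => h; have := congr1 (fun w : vec => cf w k) h.
rewrite cf_fb // eqxx /cf mxE /= => h'; clear h; lra.
Qed.

Lemma mat_eq_fb (M N : 'M[R]_8) : (forall k, (k < 8)%N -> M *m fb k = N *m fb k) -> M = N.
Proof.
move=> H; apply/matrixP => a b.
have := congr1 (fun X : vec => X a 0) (H _ (ltn_ord b)).
by rewrite /fb inord_val -!colE !mxE.
Qed.

Lemma step1 (A : 'M[R]_8) : A \in unitmx ->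
  (forall V : 'I_4 -> vec, complex.Im (Omega (fun j => A *m V j)) = complex.Im (Omega V)) ->
  forall u : vec, u != 0 -> exists r s : R,
     A *m Jm *m invmx A *m u = r *: u + s *: (Jm *m u).
Proof.
move=> uA Hi u u0.
pose v := invmx A *m u.
have Av : A *m v = u by rewrite /v mulKVmx.
have ->: A *m Jm *m invmx A *m u = A *m (Jm *m v) by rewrite /v !mulmxA.
apply: lemK => // x y.
transitivity (complex.Im (Omega (tup4 v (Jm *m v) (invmx A *m x) (invmx A *m y)))); last by rewrite Omega_vJv.
rewrite -(Hi (tup4 v _ _ _)); congr (complex.Im _).
apply: Omega_ext => j; rewrite -(inord_val j); case: j => [[|[|[|[|?]]]] hj] //=;
 rewrite ?tup4_0 ?tup4_1 ?tup4_2 ?tup4_3 ?mulKVmx //.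
Qed.

End Main3.

Set Implicit Arguments. Unset Strict Implicit. Unset Printing Implicit Defensive.
Local Open Scope complex_scope.

Section Main4.
Variable R : realType.
Local Notation C := (R[i]).
Local Notation vec := (vec R).

Definition jsg (k : nat) : R := match k with 0 | 5 | 6 | 7 => -1 | _ => 1 end.
Definition jpart (k : nat) : nat := match k with 0 => 4 | 4 => 0 | 1 => 5 | 5 => 1 | 2 => 6 | 6 => 2
  | 3 => 7 | 7 => 3 | _ => 0 end%N.

Lemma Jfb k : (k < 8)%N -> Jm *m fb k = jsg k *: (fb (jpart k) : vec).
Proof.
move=> hk; apply: vec_eq => l hl; rewrite cfJ // cfZ.
by do 8? (case: k hk => [|k] hk); do 8? (case: l hl => [|l] hl);
  rewrite //= ?cf_fb //= ?mulr0 ?mulr1 ?oppr0.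
Qed.

Lemma jsg_neq0 k : jsg k != 0.
Proof. by do 8? (case: k => [|k]); rewrite /= ?oppr_eq0 oner_eq0. Qed.

Lemma cmp (B : 'M[R]_8) (a b : nat) (r1 s1 r2 s2 r s : R) :
  (a < 8)%N -> (b < 8)%N -> (jpart a < 8)%N -> (jpart b < 8)%N ->
  [&& a != b, a != jpart b, jpart a != b, jpart a != jpart b & a != jpart a] -> (b != jpart b) ->
  B *m fb a = r1 *: fb a + s1 *: (Jm *m fb a) ->
  B *m fb b = r2 *: fb b + s2 *: (Jm *m fb b) ->
  B *m (fb a + fb b) = r *: (fb a + fb b) + s *: (Jm *m (fb a + fb b)) ->
  r1 = r2 /\ s1 = s2.
Proof.
move=> ha hb ha' hb' /and5P[d1 d2 d3 d4 d5] d6 H1 H2 H3.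
rewrite mulmxDr H1 H2 mulmxDr !Jfb // in H3.
have c := fun k => congr1 (fun w : vec => cf w k) H3.
have ca := c a; have cb := c b; have ca' := c (jpart a); have cb' := c (jpart b).
move: ca cb ca' cb'; rewrite !(cfD, cfZ) !cf_fb // !eqxx.
rewrite (negbTE d1) (negbTE d2) (negbTE d3) (negbTE d4) (negbTE d5) (negbTE d6).
rewrite (eq_sym b a) (negbTE d1) (eq_sym b (jpart a)) (negbTE d3) (eq_sym (jpart b) a) (negbTE d2)
  (eq_sym (jpart a) a) (negbTE d5) (eq_sym (jpart b) (jpart a)) (negbTE d4) (eq_sym (jpart b) b) (negbTE d6) /=.
move=> e1 e2 e3 e4.
have sa := jsg_neq0 a; have sb := jsg_neq0 b.
split; first by lra.
have h1 : s1 = s by apply: (mulIf sa); nra.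
have h2 : s2 = s by apply: (mulIf sb); nra.
by rewrite h1 h2.
Qed.

Lemma fbsum_neq0 a b : (a < 8)%N -> (b < 8)%N -> a != b -> (fb a + fb b : vec) != 0.
Proof.
move=> ha hb d; apply/eqP => h; have := congr1 (fun w : vec => cf w a) h.
rewrite cfD !cf_fb // eqxx (negbTE d) /cf mxE /= => h'; clear h; lra.
Qed.

Lemma step2 (B : 'M[R]_8) :
  (forall u : vec, u != 0 -> exists r s : R, B *m u = r *: u + s *: (Jm *m u)) ->
  B *m B = - 1%:M -> exists s : R, (s = 1 \/ s = -1) /\ B = s *: Jm.
Proof.
move=> H BB.
have [r0 [s0 e0]] := H _ (@fb_neq0 R 0%N erefl).
have [r1 [s1 e1]] := H _ (@fb_neq0 R 1%N erefl).
have [r2 [s2 e2]] := H _ (@fb_neq0 R 2%N erefl).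
have [r3 [s3 e3]] := H _ (@fb_neq0 R 3%N erefl).
have [r4 [s4 e4]] := H _ (@fb_neq0 R 4%N erefl).
have [r5 [s5 e5]] := H _ (@fb_neq0 R 5%N erefl).
have [r6 [s6 e6]] := H _ (@fb_neq0 R 6%N erefl).
have [r7 [s7 e7]] := H _ (@fb_neq0 R 7%N erefl).
have [r01 [s01 e01]] := H _ (@fbsum_neq0 0%N 1%N erefl erefl erefl).
have [q01 t01] := @cmp B 0%N 1%N _ _ _ _ _ _ erefl erefl erefl erefl erefl erefl e0 e1 e01.
have [r02 [s02 e02]] := H _ (@fbsum_neq0 0%N 2%N erefl erefl erefl).
have [q02 t02] := @cmp B 0%N 2%N _ _ _ _ _ _ erefl erefl erefl erefl erefl erefl e0 e2 e02.
have [r03 [s03 e03]] := H _ (@fbsum_neq0 0%N 3%N erefl erefl erefl).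
have [q03 t03] := @cmp B 0%N 3%N _ _ _ _ _ _ erefl erefl erefl erefl erefl erefl e0 e3 e03.
have [r05 [s05 e05]] := H _ (@fbsum_neq0 0%N 5%N erefl erefl erefl).
have [q05 t05] := @cmp B 0%N 5%N _ _ _ _ _ _ erefl erefl erefl erefl erefl erefl e0 e5 e05.
have [r06 [s06 e06]] := H _ (@fbsum_neq0 0%N 6%N erefl erefl erefl).
have [q06 t06] := @cmp B 0%N 6%N _ _ _ _ _ _ erefl erefl erefl erefl erefl erefl e0 e6 e06.
have [r07 [s07 e07]] := H _ (@fbsum_neq0 0%N 7%N erefl erefl erefl).
have [q07 t07] := @cmp B 0%N 7%N _ _ _ _ _ _ erefl erefl erefl erefl erefl erefl e0 e7 e07.
have [r41 [s41 e41]] := H _ (@fbsum_neq0 4%N 1%N erefl erefl erefl).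
have [q41 t41] := @cmp B 4%N 1%N _ _ _ _ _ _ erefl erefl erefl erefl erefl erefl e4 e1 e41.
subst r1 r2 r3 r5 r6 r7 s1 s2 s3 s5 s6 s7; subst r4 s4.
have Bm : B = r0%:M + s0 *: Jm.
  apply: mat_eq_fb => k hk; rewrite mulmxDl mul_scalar_mx -scalemxAl.
  by do 8? (case: k hk => [|k] hk); rewrite ?e0 ?e1 ?e2 ?e3 ?e4 ?e5 ?e6 ?e7.
have := congr1 (fun M => M *m fb 0) BB.
rewrite -mulmxA e0 mulmxDr -!scalemxAr e0 Jfb // -!scalemxAr e4 !Jfb //= mulNmx mul1mx.
move=> h.
have c0 := congr1 (fun w : vec => cf w 0) h.
have c4 := congr1 (fun w : vec => cf w 4) h.
move: c0 c4; rewrite !(cfD, cfZ, cfN) !cf_fb //= => c0 c4.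
have hr : r0 = 0 by nra.
have hs : s0 = 1 \/ s0 = -1.
  have : (s0 - 1) * (s0 + 1) = 0 by nra.
  by move/eqP; rewrite mulf_eq0 => /orP[/eqP h1|/eqP h1]; [left|right]; lra.
exists s0; split => //.
by rewrite Bm hr raddf0 add0r.
Qed.

End Main4.

Set Implicit Arguments. Unset Strict Implicit. Unset Printing Implicit Defensive.
Local Open Scope complex_scope.

Section Main5.
Variable R : realType.
Local Notation C := (R[i]).
Local Notation vec := (vec R).

Definition pf (f : vec -> vec -> R) (a b c d : vec) : R :=
  f a b * f c d - f a c * f b d + f a d * f b c.

Lemma omega_cf (u w : vec) : omega u w =
  (cf u 1 * cf w 5 - cf w 1 * cf u 5) + (cf u 2 * cf w 6 - cf w 2 * cf u 6)
  + (cf u 3 * cf w 7 - cf w 3 * cf u 7) + (cf u 4 * cf w 0 - cf w 4 * cf u 0).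
Proof. by []. Qed.

Lemma omega_asym (u w : vec) : omega u w = - omega w u.
Proof. rewrite !omega_cf; ring. Qed.

Lemma omega_J (u w : vec) : omega (Jm *m u) (Jm *m w) = omega u w.
Proof. rewrite !omega_cf !cfJ //=; ring. Qed.

Lemma omegaN (u w : vec) : omega (- u) w = - omega u w.
Proof. rewrite !omega_cf !cfN; ring. Qed.

Lemma g_cf (u w : vec) : g u w = cf u 0 * cf w 0 + (cf u 1 * cf w 1 + (cf u 2 * cf w 2 + (cf u 3 * cf w 3 +
   (cf u 4 * cf w 4 + (cf u 5 * cf w 5 + (cf u 6 * cf w 6 + cf u 7 * cf w 7)))))).
Proof. by rewrite /g sum8. Qed.

Lemma omega_g (u w : vec) : omega u w = g (Jm *m u) w.
Proof. rewrite omega_cf g_cf !cfJ //=; ring. Qed.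

Lemma g_mx (u w : vec) : g u w = (u^T *m w) 0 0.
Proof. by rewrite /g mxE; apply: eq_bigr => a _; rewrite mxE. Qed.

Lemma omega_mx (u w : vec) : omega u w = (u^T *m Jm^T *m w) 0 0.
Proof. by rewrite omega_g g_mx trmx_mul. Qed.

Lemma gN (u w : vec) : g (- u) w = - g u w.
Proof. rewrite !g_cf !cfN; ring. Qed.

Lemma fbT_mx (M : 'M[R]_8) a b : ((fb a : vec)^T *m M *m fb b) 0 0 = M (inord a) (inord b).
Proof. by rewrite /fb -mulmxA -colE trmx_delta -rowE !mxE. Qed.

Lemma W_pf (V : 'I_4 -> vec) : wedge2_2 (omega (R:=R)) (omega (R:=R)) V =
  2 * pf (omega (R:=R)) (V (inord 0)) (V (inord 1)) (V (inord 2)) (V (inord 3)).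
Proof.
rewrite /wedge2_2.
have := @pf4 R (fun a b => omega (V (inord a)) (V (inord b))) (fun a b => omega_asym _ _).
under eq_bigr => s _ do rewrite !inord_val.
move=> ->; rewrite /pf; by field.
Qed.

Lemma W_tup (a b c d : vec) : wedge2_2 (omega (R:=R)) (omega (R:=R)) (tup4 a b c d) = 2 * pf (omega (R:=R)) a b c d.
Proof. by rewrite W_pf tup4_0 tup4_1 tup4_2 tup4_3. Qed.

End Main5.

Set Implicit Arguments. Unset Strict Implicit. Unset Printing Implicit Defensive.
Local Open Scope complex_scope.

Section Main6.
Variable R : realType.
Local Notation C := (R[i]).
Local Notation vec := (vec R).

Lemma cf_Afb (A : 'M[R]_8) a k : cf (A *m fb a) k = A (inord k) (inord a).
Proof. by rewrite /fb -colE /cf !mxE. Qed.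

Lemma cf_Av (A : 'M[R]_8) (v : vec) k : cf (A *m v) k =
  A (inord k) (inord 0) * cf v 0 + (A (inord k) (inord 1) * cf v 1 + (A (inord k) (inord 2) * cf v 2 +
  (A (inord k) (inord 3) * cf v 3 + (A (inord k) (inord 4) * cf v 4 + (A (inord k) (inord 5) * cf v 5 +
  (A (inord k) (inord 6) * cf v 6 + A (inord k) (inord 7) * cf v 7)))))).
Proof. by rewrite /cf mxE sum8. Qed.

Lemma theta_Av (A : 'M[R]_8) i (v : vec) : theta i (A *m v) =
  (cf v 0)%:C * theta i (A *m fb 0) + ((cf v 1)%:C * theta i (A *m fb 1) +
  ((cf v 2)%:C * theta i (A *m fb 2) + ((cf v 3)%:C * theta i (A *m fb 3) +
  ((cf v 4)%:C * theta i (A *m fb 4) + ((cf v 5)%:C * theta i (A *m fb 5) +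
  ((cf v 6)%:C * theta i (A *m fb 6) + (cf v 7)%:C * theta i (A *m fb 7))))))).
Proof.
rewrite !theta_cf !cf_Av !cf_fb //=.
rewrite !(rmorphD, rmorphM) /=; ring.
Qed.

Lemma Jfp k : (k < 4)%N -> Jm *m fp k = fq k :> vec.
Proof. by move=> hk; rewrite /fp Jfb /pI; do 4? (case: k hk => [|k] hk); rewrite //= scale1r. Qed.

Lemma Jfq k : (k < 4)%N -> Jm *m fq k = - fp k :> vec.
Proof. by move=> hk; rewrite /fq Jfb /qI; do 4? (case: k hk => [|k] hk); rewrite //= scaleN1r. Qed.

Lemma JJm : Jm *m Jm = - 1%:M :> 'M[R]_8.
Proof. apply: mat_eq_fb => k hk; by rewrite -mulmxA JJ mulNmx mul1mx. Qed.

Lemma ob_pp i j : (i < 4)%N -> (j < 4)%N -> omega (fp i) (fp j) = 0 :> R.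
Proof.
move=> hi hj; rewrite omega_cf /fp /pI; do 4? (case: i hi => [|i] hi); do 4? (case: j hj => [|j] hj);
 rewrite //= !cf_fb //=; ring.
Qed.
Lemma ob_pq i j : (i < 4)%N -> (j < 4)%N -> omega (fp i) (fq j) = (i == j)%:R :> R.
Proof.
move=> hi hj; rewrite omega_cf /fp /fq /pI /qI; do 4? (case: i hi => [|i] hi); do 4? (case: j hj => [|j] hj);
 rewrite //= !cf_fb //=; ring.
Qed.
Lemma ob_qp i j : (i < 4)%N -> (j < 4)%N -> omega (fq i) (fp j) = - (i == j)%:R :> R.
Proof.
move=> hi hj; rewrite omega_cf /fp /fq /pI /qI; do 4? (case: i hi => [|i] hi); do 4? (case: j hj => [|j] hj);
 rewrite //= !cf_fb //=; ring.
Qed.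
Lemma ob_qq i j : (i < 4)%N -> (j < 4)%N -> omega (fq i) (fq j) = 0 :> R.
Proof.
move=> hi hj; rewrite omega_cf /fq /qI; do 4? (case: i hi => [|i] hi); do 4? (case: j hj => [|j] hj);
 rewrite //= !cf_fb //=; ring.
Qed.

End Main6.

Set Implicit Arguments. Unset Strict Implicit. Unset Printing Implicit Defensive.
Local Open Scope complex_scope.

Section Lin.
Variable R : realType.
Local Notation C := (R[i]).
Local Notation vec := (vec R).
Variable A : 'M[R]_8.
Hypothesis AJ : A *m Jm = Jm *m A.

Definition Sm : 'M[C]_4 := \matrix_(i, k) theta i (A *m fp k).

Lemma thA_fq i k : (k < 4)%N -> theta i (A *m fq k) = 'i%C * theta i (A *m fp k).
Proof. by move=> hk; rewrite -Jfp // mulmxA AJ -mulmxA theta_J. Qed.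

Lemma theta_lin i (v : vec) : theta i (A *m v) = \sum_(k < 4) Sm i k * theta k v.
Proof.
rewrite sum4 !mxE theta_Av !(theta_cf (inord _) v) /pI /qI !inordK //=.
have q0 := thA_fq i (k:=0) erefl; have q1 := thA_fq i (k:=1) erefl.
have q2 := thA_fq i (k:=2) erefl; have q3 := thA_fq i (k:=3) erefl.
rewrite /fq /fp /pI /qI /= in q0 q1 q2 q3.
rewrite /fp /pI /= q0 q1 q2 q3; ring.
Qed.

Lemma Omega_lin (V : 'I_4 -> vec) : Omega (fun j => A *m V j) = \det Sm * Omega V.
Proof.
rewrite /Omega /wedge1_4 -det_mulmx; congr (\det _); apply/matrixP => i j.
rewrite !mxE theta_lin; apply: eq_bigr => k _; by rewrite !mxE.
Qed.

Variable c : R.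
Hypothesis uA : A \in unitmx.
Hypothesis Hi : forall V : 'I_4 -> vec,
  complex.Im (Omega (fun j => A *m V j)) = complex.Im (Omega V).
Hypothesis Hr : forall V : 'I_4 -> vec,
  c * complex.Re (Omega (fun j => A *m V j)) - 2^-1 * wedge2_2 (omega (R:=R)) (omega (R:=R)) (fun j => A *m V j)
  = c * complex.Re (Omega V) - 2^-1 * wedge2_2 (omega (R:=R)) (omega (R:=R)) V.

Lemma detSm : \det Sm = 1.
Proof.
have h1 := Hi Vp; have h2 := Hi Vq0.
rewrite !Omega_lin Omega_Vp Omega_Vq0 in h1 h2.
move: (\det Sm) h1 h2 => [x y] /= h1 h2.
apply/eqP; rewrite eq_complex /=; apply/andP; split; apply/eqP; lra.
Qed.

Lemma Omega_pres (V : 'I_4 -> vec) : Omega (fun j => A *m V j) = Omega V.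
Proof. by rewrite Omega_lin detSm mul1r. Qed.

Lemma W_pres (V : 'I_4 -> vec) :
  wedge2_2 (omega (R:=R)) (omega (R:=R)) (fun j => A *m V j) = wedge2_2 (omega (R:=R)) (omega (R:=R)) V.
Proof. have := Hr V; rewrite Omega_pres => h; lra. Qed.

Lemma pf_pres (a b c' d : vec) :
  pf (omega (R:=R)) (A *m a) (A *m b) (A *m c') (A *m d) = pf (omega (R:=R)) a b c' d.
Proof.
have := W_pres (tup4 a b c' d); rewrite W_pf W_tup tup4_0 tup4_1 tup4_2 tup4_3 => h; lra.
Qed.

Local Notation x i j := (omega (A *m fp i) (A *m fq j)).
Local Notation y i j := (omega (A *m fp i) (A *m fp j)).

Lemma hJ (u w : vec) : omega (A *m (Jm *m u)) (A *m (Jm *m w)) = omega (A *m u) (A *m w).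
Proof. by rewrite !mulmxA AJ -!mulmxA omega_J. Qed.

Lemma r1 i j : (i < 4)%N -> (j < 4)%N -> omega (A *m fq i) (A *m fp j) = - x i j.
Proof. by move=> hi hj; rewrite -hJ Jfq // Jfp // mulmxN omegaN. Qed.

Lemma r2 i j : (i < 4)%N -> (j < 4)%N -> omega (A *m fq i) (A *m fq j) = y i j.
Proof. by move=> hi hj; rewrite -!Jfp // hJ. Qed.

Lemma r3 i j : (i < 4)%N -> (j < 4)%N -> x j i = x i j.
Proof. by move=> hi hj; rewrite omega_asym r1 // opprK. Qed.

Lemma ya i j : y j i = - y i j.
Proof. by rewrite omega_asym. Qed.

Lemma E_im i j k : (i < 4)%N -> (j < 4)%N -> (k < 4)%N ->
  x i i * y j k + y i j * x i k - y i k * x i j = 0.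
Proof.
move=> hi hj hk; have := pf_pres (fp i) (fq i) (fp j) (fp k).
rewrite /pf !r1 // !ob_pq // !ob_pp // !ob_qp // => h.
rewrite eqxx /= in h; lra.
Qed.

Lemma E_re i j k : (i < 4)%N -> (j < 4)%N -> (k < 4)%N ->
  x i i * x j k - y i j * y i k - x i k * x i j = (j == k)%:R - (i == k)%:R * (i == j)%:R.
Proof.
move=> hi hj hk; have := pf_pres (fp i) (fq i) (fp j) (fq k).
rewrite /pf r2 // r1 // !ob_pq // !ob_pp // !ob_qq // !ob_qp // => h.
rewrite eqxx /= in h; lra.
Qed.

Lemma offdiag i j k : (i < 4)%N -> (j < 4)%N -> (k < 4)%N ->
  i != j -> i != k -> j != k -> x j k = 0 /\ y j k = 0.
Proof.
move=> hi hj hk dij dik djk.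
have e1 := E_re hi hj hk; have e1i := E_im hi hj hk.
have e2 := E_re hj hi hk; have e2i := E_im hj hi hk.
have eD := E_re hi hj hj.
rewrite (negbTE djk) (negbTE dik) /= in e1.
rewrite (negbTE dik) (negbTE djk) /= in e2.
rewrite eqxx (negbTE dij) /= in eD.
rewrite (r3 hi hj) (ya i j) in e2 e2i.
have E1 : x i i * x j k - y i j * y i k - x i k * x i j = 0 by lra.
have E2 : x j j * x i k - (- y i j) * y j k - x j k * x i j = 0 by lra.
have D : x i i * x j j - y i j * y i j - x i j * x i j = 1 by lra.
split.
- rewrite -[x j k]mulr1 -D.
  have -> : x j k * (x i i * x j j - y i j * y i j - x i j * x i j) =
    x j j * (x i i * x j k - y i j * y i k - x i k * x i j)
    + x i j * (x j j * x i k - (- y i j) * y j k - x j k * x i j)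
    + y i j * (x j j * y i k + - y i j * x j k - y j k * x i j) by ring.
  by rewrite E1 E2 e2i !mulr0 !addr0.
- rewrite -[y j k]mulr1 -D.
  have -> : y j k * (x i i * x j j - y i j * y i j - x i j * x i j) =
    x j j * (x i i * y j k + y i j * x i k - y i k * x i j)
    + x i j * (x j j * y i k + - y i j * x j k - y j k * x i j)
    - y i j * (x j j * x i k - (- y i j) * y j k - x j k * x i j) by ring.
  by rewrite e1i E2 e2i !mulr0 !addr0 subr0.
Qed.

Lemma third i j : (i < 4)%N -> (j < 4)%N -> exists k, [&& (k < 4)%N, k != i & k != j].
Proof.
move=> hi hj; do 4? (case: i hi => [|i] hi); do 4? (case: j hj => [|j] hj);
  by [exists 0%N | exists 1%N | exists 2%N | exists 3%N].
Qed.

Lemma offd i j : (i < 4)%N -> (j < 4)%N -> i != j -> x i j = 0 /\ y i j = 0.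
Proof.
move=> hi hj dij; have [k /and3P[hk dki dkj]] := third hi hj.
by apply: (@offdiag k) => //; rewrite eq_sym.
Qed.

Lemma g_ge0 (u : vec) : 0 <= g u u.
Proof. rewrite g_cf; nra. Qed.

Lemma x_ge0 i : (i < 4)%N -> 0 <= x i i.
Proof.
move=> hi; rewrite -Jfp // mulmxA AJ -mulmxA omega_g; exact: g_ge0.
Qed.

Lemma three1 (a b c' : R) : 0 <= a -> a * b = 1 -> a * c' = 1 -> b * c' = 1 -> a = 1.
Proof. move=> ha h1 h2 h3; nra. Qed.

Lemma dprod i j : (i < 4)%N -> (j < 4)%N -> i != j -> x i i * x j j = 1.
Proof.
move=> hi hj dij; have eD := E_re hi hj hj.
rewrite eqxx (negbTE dij) /= in eD.
have [h1 h2] := offd hi hj dij; rewrite h1 h2 in eD; lra.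
Qed.

Lemma diag i : (i < 4)%N -> x i i = 1.
Proof.
move=> hi.
have [k /and3P[hk dki _]] := third hi hi.
have [l /and3P[hl dli dlk]] := third hi hk.
apply: (@three1 _ (x k k) (x l l)); first exact: x_ge0.
- by apply: dprod; rewrite // eq_sym.
- by apply: dprod; rewrite // eq_sym.
- by apply: dprod; rewrite // eq_sym.
Qed.

Lemma fb_pq a : (a < 8)%N -> exists i, (i < 4)%N /\ ((fb a : vec) = fp i \/ (fb a : vec) = fq i).
Proof.
move=> ha; do 8? (case: a ha => [|a] ha).
- by exists 0%N; split => //; right.
- by exists 1%N; split => //; left.
- by exists 2%N; split => //; left.
- by exists 3%N; split => //; left.
- by exists 0%N; split => //; left.
- by exists 1%N; split => //; right.
- by exists 2%N; split => //; right.
- by exists 3%N; split => //; right.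
- by [].
Qed.

Lemma hb a b : (a < 8)%N -> (b < 8)%N ->
  omega (A *m fb a) (A *m fb b) = omega (fb a) (fb b).
Proof.
move=> ha hb; have [i [hi [-> | ->]]] := fb_pq ha; have [j [hj [-> | ->]]] := fb_pq hb;
 (first [rewrite ob_pp // | rewrite ob_pq // | rewrite ob_qp // r1 // | rewrite ob_qq // r2 //]);
 (case: (eqVneq i j) => [<- | dij]);
 first [ by rewrite diag // eqxx | by have := ya i i => h; lra
 | (have [h1 h2] := offd hi hj dij); by rewrite ?h1 ?h2 ?(negbTE dij) ?oppr0 ].
Qed.

Lemma omega_Apres (u w : vec) : omega (A *m u) (A *m w) = omega u w.
Proof.
have e : forall u w : vec, omega (A *m u) (A *m w) = (u^T *m (A^T *m Jm^T *m A) *m w) 0 0.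
  by move=> u' w'; rewrite omega_mx trmx_mul !mulmxA.
have M : A^T *m Jm^T *m A = Jm^T.
  apply/matrixP => a b; rewrite -(inord_val a) -(inord_val b).
  rewrite -fbT_mx -e hb ?ltn_ord // omega_mx fbT_mx //.
by rewrite e M -omega_mx.
Qed.

Lemma g_om (u w : vec) : g u w = - omega (Jm *m u) w.
Proof. by rewrite omega_g JJ gN opprK. Qed.

Lemma g_Apres (u w : vec) : g (A *m u) (A *m w) = g u w.
Proof. by rewrite !g_om mulmxA -AJ -mulmxA omega_Apres. Qed.

Lemma lin_SU4 : SU4 A.
Proof.
split => //; split; first exact: g_Apres.
split.
- by apply: functional_extensionality => u; apply: functional_extensionality => w; exact: omega_Apres.
- by apply: functional_extensionality => V; exact: Omega_pres.
Qed.

End Lin.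

Set Implicit Arguments. Unset Strict Implicit. Unset Printing Implicit Defensive.
Local Open Scope complex_scope.

Section Anti.
Variable R : realType.
Local Notation C := (R[i]).
Local Notation vec := (vec R).

Lemma conji : conjc ('i%C : C) = - 'i%C.
Proof. by apply/eqP; rewrite eq_complex /=; apply/andP; split; apply/eqP; ring. Qed.

Lemma conj_theta k (v : vec) : conjc (theta k v) = (cf v (pI k))%:C - 'i%C * (cf v (qI k))%:C.
Proof. by rewrite theta_cf; apply/eqP; rewrite eq_complex /=; apply/andP; split; apply/eqP; ring. Qed.

Definition M1 : 'M[R]_8 := 1%:M + Jm.
Definition M2 : 'M[R]_8 := 1%:M - Jm.

Lemma omega_M1 (u w : vec) : omega (M1 *m u) (M1 *m w) = 2 * omega u w.
Proof. rewrite /M1 !mulmxDl !mul1mx !omega_cf !cfD !cfJ //=; ring. Qed.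

Lemma omega_M2 (u w : vec) : omega (M2 *m u) (M2 *m w) = 2 * omega u w.
Proof. rewrite /M2 !mulmxBl !mul1mx !omega_cf !cfB !cfJ //=; ring. Qed.

Lemma theta_M1 i (v : vec) : theta i (M1 *m v) = (1 + 'i%C) * theta i v.
Proof. rewrite /M1 mulmxDl mul1mx thetaD theta_J; ring. Qed.

Lemma ipow4 : (1 + 'i%C) ^+ 4 = - 4 :> C.
Proof. by rewrite !exprS expr0; apply/eqP; rewrite eq_complex /=; apply/andP; split; apply/eqP; ring. Qed.

Lemma Omega_M1 (V : 'I_4 -> vec) : Omega (fun j => M1 *m V j) = - 4 * Omega V.
Proof.
rewrite /Omega /wedge1_4 -ipow4 -detZ; congr (\det _); apply/matrixP => i j.
by rewrite !mxE theta_M1.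
Qed.

Lemma W_M1 (V : 'I_4 -> vec) : wedge2_2 (omega (R:=R)) (omega (R:=R)) (fun j => M1 *m V j)
  = 4 * wedge2_2 (omega (R:=R)) (omega (R:=R)) V.
Proof. rewrite !W_pf /pf !omega_M1; ring. Qed.

Lemma W_M2 (V : 'I_4 -> vec) : wedge2_2 (omega (R:=R)) (omega (R:=R)) (fun j => M2 *m V j)
  = 4 * wedge2_2 (omega (R:=R)) (omega (R:=R)) V.
Proof. rewrite !W_pf /pf !omega_M2; ring. Qed.

Variable A : 'M[R]_8.
Hypothesis AJ : A *m Jm = - (Jm *m A).
Variable c : R.
Hypothesis c_gt0 : 0 < c.
Hypothesis Hi : forall V : 'I_4 -> vec,
  complex.Im (Omega (fun j => A *m V j)) = complex.Im (Omega V).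
Hypothesis Hr : forall V : 'I_4 -> vec,
  c * complex.Re (Omega (fun j => A *m V j)) - 2^-1 * wedge2_2 (omega (R:=R)) (omega (R:=R)) (fun j => A *m V j)
  = c * complex.Re (Omega V) - 2^-1 * wedge2_2 (omega (R:=R)) (omega (R:=R)) V.

Definition Sa : 'M[C]_4 := \matrix_(i, k) theta i (A *m fp k).

Lemma thA_fq' i k : (k < 4)%N -> theta i (A *m fq k) = - 'i%C * theta i (A *m fp k).
Proof. by move=> hk; rewrite -Jfp // mulmxA AJ mulNmx -mulmxA thetaN theta_J mulNr. Qed.

Lemma theta_anti i (v : vec) : theta i (A *m v) = \sum_(k < 4) Sa i k * conjc (theta k v).
Proof.
rewrite sum4 !mxE theta_Av !conj_theta /pI /qI !inordK //=.
have q0 := thA_fq' i (k:=0) erefl; have q1 := thA_fq' i (k:=1) erefl.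
have q2 := thA_fq' i (k:=2) erefl; have q3 := thA_fq' i (k:=3) erefl.
rewrite /fq /fp /pI /qI /= in q0 q1 q2 q3.
rewrite /fp /pI /= q0 q1 q2 q3; ring.
Qed.

Lemma Omega_anti (V : 'I_4 -> vec) : Omega (fun j => A *m V j) = \det Sa * conjc (Omega V).
Proof.
rewrite /Omega /wedge1_4 -det_map_mx -det_mulmx; congr (\det _); apply/matrixP => i j.
rewrite !mxE theta_anti; apply: eq_bigr => k _; by rewrite !mxE.
Qed.

Lemma detSa : \det Sa = -1.
Proof.
have h1 := Hi Vp; have h2 := Hi Vq0.
rewrite !Omega_anti Omega_Vp Omega_Vq0 conji rmorph1 in h1 h2.
move: (\det Sa) h1 h2 => [x y] /= h1 h2.
apply/eqP; rewrite eq_complex /=; apply/andP; split; apply/eqP; lra.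
Qed.

Lemma Re_anti (V : 'I_4 -> vec) : complex.Re (Omega (fun j => A *m V j)) = - complex.Re (Omega V).
Proof. rewrite Omega_anti detSa; move: (Omega V) => [x y] /=; ring. Qed.

Lemma ReM4 (z : C) : complex.Re (- 4 * z) = - 4 * complex.Re z.
Proof. by case: z => x y /=; ring. Qed.

Lemma Re1 : complex.Re (1 : C) = 1.
Proof. by []. Qed.

Lemma anti_false : False.
Proof.
have e1 := Hr Vp.
have e2 := Hr (fun j => M1 *m Vp j).
rewrite (Re_anti (fun j => M1 *m Vp j)) in e2.
have AM : forall j, A *m (M1 *m Vp j) = M2 *m (A *m Vp j).
  move=> j; rewrite !mulmxA; congr (_ *m _).
  by rewrite /M1 /M2 mulmxDr mulmx1 AJ mulmxBl mul1mx.
rewrite (_ : (fun j => A *m (M1 *m Vp j)) = (fun j => M2 *m (A *m Vp j))) in e2; last first.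
  by apply: functional_extensionality => j; exact: AM.
rewrite W_M2 W_M1 Omega_M1 in e2.
rewrite ReM4 Omega_Vp Re1 in e2.
rewrite Re_anti Omega_Vp Re1 in e1.
move: e1 e2.
move: (wedge2_2 _ _ (fun j => A *m Vp j)) (wedge2_2 _ _ Vp) => Wa W0 e1 e2.
have h2 : (2:R)^-1 * 2 = 1 by field.
clear -e1 e2 c_gt0. rewrite !mulr1 in e1 e2. have t1 : Wa - W0 = -4 * c by lra. have t2 : Wa - W0 = 4 * c by lra. have cp : (0 < c)%R := c_gt0. clear c_gt0 e1 e2. lra.
Qed.

End Anti.

Local Close Scope complex_scope.
Unset Implicit Arguments.

Theorem mainTheorem7 (R : realType) (tau : R) : tau != 0 ->
  forall A : 'M[R]_8, stab_Phi tau A <-> SU4 A.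
Proof.
move=> t0 A; split.
- case=> uA hP.
  have HPV : forall V, Phi tau (fun j => A *m V j) = Phi tau V.
    by move=> V; have := congr1 (fun f => f V) hP.
  have sh : sinhR (2 * tau) != 0.
    by apply: sinhR_neq0; rewrite mulf_neq0 // pnatr_eq0.
  have Hi : forall V : 'I_4 -> vec R,
      complex.Im (Omega (fun j => A *m V j)) = complex.Im (Omega V).
    move=> V; have := congr1 (@complex.Im R) (HPV V); rewrite /Phi !ImC.
    exact: mulfI.
  have Hr : forall V : 'I_4 -> vec R,
      coshR (2 * tau) * complex.Re (Omega (fun j => A *m V j))
        - 2^-1 * wedge2_2 (omega (R:=R)) (omega (R:=R)) (fun j => A *m V j)
      = coshR (2 * tau) * complex.Re (Omega V) - 2^-1 * wedge2_2 (omega (R:=R)) (omega (R:=R)) V.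
    by move=> V; have := congr1 (@complex.Re R) (HPV V); rewrite /Phi !ReC.
  have S1 := step1 uA Hi.
  have BB : A *m Jm *m invmx A *m (A *m Jm *m invmx A) = - 1%:M.
    by rewrite !mulmxA mulmxKV // -(mulmxA A Jm Jm) JJm mulmxN mulmx1 mulNmx mulmxV.
  have [s [hs Bs]] := step2 S1 BB.
  have AJs : A *m Jm = s *: (Jm *m A).
    by rewrite scalemxAl -Bs mulmxKV.
  case: hs => hs; rewrite hs in AJs.
  + rewrite scale1r in AJs.
    exact: (lin_SU4 AJs uA Hi Hr).
  + rewrite scaleN1r in AJs.
    exfalso; exact: (anti_false AJs (coshR_gt0 _) Hi Hr).
- case=> uA [Hg [Hom HOm]]; split => //.
  apply: functional_extensionality => V; rewrite /pullback4 /Phi.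
  have -> : Omega (fun j => A *m V j) = Omega V by have := congr1 (fun f => f V) HOm.
  have -> : wedge2_2 (omega (R:=R)) (omega (R:=R)) (fun j => A *m V j) = wedge2_2 (omega (R:=R)) (omega (R:=R)) V.
    rewrite /wedge2_2; congr (_ * _); apply: eq_bigr => s _.
    have hom : forall u w : vec R, omega (A *m u) (A *m w) = omega u w.
      by move=> u w; have := congr1 (fun f => f u w) Hom.
    by rewrite !hom.
  by [].
Qed.
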